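(* Let $\mathcal{L}_1,\mathcal{L}_2\in\mathrm{Mat}_d(\mathbb{Z})$ be irreducible and coprime with $|\det\mathcal{L}_1|=p$, $|\det\mathcal{L}_2|=q$. Let $\Lambda=\mathbb{Z}^d\cap \mathcal{L}_1^{-1}\mathcal{L}_2 \mathbb{Z}^d\cap \mathcal{L}_2^{-1}\mathcal{L}_1 \mathbb{Z}^d$ and $\Gamma_1=\Lambda\cap \mathcal{L}_2^{-1}\mathcal{L}_1\Lambda$. Then $\mathcal{L}_1$ and $\mathcal{L}_2$ induce well-defined group homomorphisms $$\phi_1,\phi_2:\mathbb{Z}^d/\Gamma_1\to \mathbb{Z}^d/\mathcal{L}_1\Lambda,\qquad \phi_i(x+\Gamma_1)=\mathcal{L}_ix+\mathcal{L}_1\Lambda,$$ of finite abelian groups, and $\phi_1+\phi_2$ is an isomorphism. (In particular $\Gamma_1$ has index $p^2q$ in $\mathbb{Z}^d$.)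
   Context: Irreducible: there are no non-trivial subspaces $U,V$ of $\mathbb{Q}^d$ of the same dimension with $\mathcal{L}_1U\subseteq V$ and $\mathcal{L}_2U\subseteq V$. Coprime: there are no $\mathcal{P},\mathcal{Q}\in \mathrm{GL}_d(\mathbb{Q})$ with $0<|\det(\mathcal{P})\det(\mathcal{Q})|<1$ such that $\mathcal{P}\mathcal{L}_1\mathcal{Q},\mathcal{P}\mathcal{L}_2\mathcal{Q}\in\mathrm{Mat}_d(\mathbb{Z})$. Under these hypotheses $\Lambda$ is a lattice of index $pq$ in $\mathbb{Z}^d$. *)

(* Defs.v *)
(* Vectors of Q^d are column vectors 'cV[rat]_d; Z^d is the
   set of those with integer entries. Subsets of Q^d are predicates. *)
From HB Require Import structures.
From mathcomp Require Import all_boot all_order all_algebra.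
Set Implicit Arguments. Unset Strict Implicit. Unset Printing Implicit Defensive.
Import Order.TTheory GRing.Theory Num.Theory.
Local Open Scope ring_scope.

Definition ratmx (m n : nat) (L : 'M[int]_(m, n)) : 'M[rat]_(m, n) :=
  map_mx (fun z : int => z%:~R) L.

Definition intmx (m n : nat) (A : 'M[rat]_(m, n)) : Prop :=
  forall i j, A i j \is a Num.int.

Definition Zd (d : nat) : 'cV[rat]_d -> Prop := fun v => intmx v.

Definition img (d : nat) (M : 'M[rat]_d) (S : 'cV[rat]_d -> Prop)
  : 'cV[rat]_d -> Prop := fun w => exists v, S v /\ w = M *m v.

Definition subsetQ (d : nat) (S T : 'cV[rat]_d -> Prop) : Prop :=
  forall v, S v -> T v.

(* Subspaces are represented as row spaces of
   matrices (mxalgebra); the image of a subspace spanned by rows u under the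
   column action v |-> L v is spanned by the rows u *m L^T. *)
Definition irreducible (d : nat) (L1 L2 : 'M[int]_d) : Prop :=
  ~ exists U V : 'M[rat]_d,
      [/\ \rank U = \rank V, (0 < \rank U)%N, (\rank U < d)%N,
          (U *m (ratmx L1)^T <= V)%MS & (U *m (ratmx L2)^T <= V)%MS].

Definition coprime_pair (d : nat) (L1 L2 : 'M[int]_d) : Prop :=
  ~ exists P Q : 'M[rat]_d,
      [/\ P \in unitmx, Q \in unitmx,
          0 < `|\det P * \det Q| < 1,
          intmx (P *m ratmx L1 *m Q) & intmx (P *m ratmx L2 *m Q)].

Definition Lambda (d : nat) (L1 L2 : 'M[int]_d) : 'cV[rat]_d -> Prop :=
  fun x => [/\ Zd x,
               img (invmx (ratmx L1) *m ratmx L2) (@Zd d) x &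
               img (invmx (ratmx L2) *m ratmx L1) (@Zd d) x].

Definition Gamma1 (d : nat) (L1 L2 : 'M[int]_d) : 'cV[rat]_d -> Prop :=
  fun x => Lambda L1 L2 x /\
           img (invmx (ratmx L2) *m ratmx L1) (Lambda L1 L2) x.

(* The subgroup S of Z^d has exactly n cosets in Z^d, i.e. Z^d/S is a
   (finite) group of order n: there are n pairwise incongruent
   representatives in Z^d covering all of Z^d modulo S. *)
Definition coset_count (d : nat) (S : 'cV[rat]_d -> Prop) (n : nat) : Prop :=
  exists r : 'I_n -> 'cV[rat]_d,
    [/\ forall i, Zd (r i),
        forall i j, S (r i - r j) -> i = j &
        forall x, Zd x -> exists i, S (x - r i)].

(* Main.v *)
Require Import Defs.
From HB Require Import structures.
From mathcomp Require Import all_boot all_order all_algebra zify.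
From mathcomp Require Import boolp.
Import Order.TTheory GRing.Theory Num.Theory.
Local Open Scope ring_scope.
Set Implicit Arguments. Unset Strict Implicit. Unset Printing Implicit Defensive.

Section Basics.
Variable d : nat.
Implicit Types (A B : 'M[rat]_d) (x y v : 'cV[rat]_d).

Lemma intmxP m n (A : 'M[rat]_(m, n)) : intmx A <-> forall i j, A i j \is a Num.int.
Proof. by []. Qed.

Lemma intmxD m n (A B : 'M[rat]_(m, n)) : intmx A -> intmx B -> intmx (A + B).
Proof. by move=> hA hB i j; rewrite mxE rpredD. Qed.
Lemma intmxN m n (A : 'M[rat]_(m, n)) : intmx A -> intmx (- A).
Proof. by move=> hA i j; rewrite mxE rpredN. Qed.
Lemma intmxB m n (A B : 'M[rat]_(m, n)) : intmx A -> intmx B -> intmx (A - B).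
Proof. by move=> hA hB; apply: intmxD => //; apply: intmxN. Qed.
Lemma intmx0 m n : intmx (0 : 'M[rat]_(m, n)).
Proof. by move=> i j; rewrite mxE. Qed.
Lemma intmx1 n : intmx (1%:M : 'M[rat]_n).
Proof. by move=> i j; rewrite mxE; case: (i == j). Qed.
Lemma intmxM m n k (A : 'M[rat]_(m, n)) (B : 'M[rat]_(n, k)) :
  intmx A -> intmx B -> intmx (A *m B).
Proof.
move=> hA hB i j; rewrite mxE; apply: rpred_sum => l _; exact: rpredM.
Qed.
Lemma intmxZ m n (c : rat) (A : 'M[rat]_(m, n)) :
  c \is a Num.int -> intmx A -> intmx (c *: A).
Proof. by move=> hc hA i j; rewrite mxE rpredM. Qed.
Lemma intmx_ratmx m n (L : 'M[int]_(m, n)) : intmx (ratmx L).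
Proof. by move=> i j; rewrite mxE intr_int. Qed.
Lemma intmx_delta m n i0 j0 : intmx (delta_mx i0 j0 : 'M[rat]_(m, n)).
Proof. by move=> i j; rewrite mxE; case: (_ && _). Qed.
Lemma intmx_ex m n (A : 'M[rat]_(m, n)) : intmx A -> exists L, A = ratmx L.
Proof.
move=> hA; exists (map_mx numq A); apply/matrixP => i j.
by rewrite !mxE numqK //; apply: hA.
Qed.

Lemma intmx_test m n (A : 'M[rat]_(m, n)) :
  (forall v : 'cV[rat]_n, intmx v -> intmx (A *m v)) -> intmx A.
Proof.
move=> h i j; have := h (delta_mx j 0) (intmx_delta _ _) i 0.
rewrite mxE (bigD1 j) //= big1 ?addr0; last first.
  by move=> k /negbTE kj; rewrite mxE kj mulr0.
by rewrite mxE !eqxx mulr1.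
Qed.

Lemma ratmxM m n k (A : 'M[int]_(m, n)) (B : 'M[int]_(n, k)) :
  ratmx (A *m B) = ratmx A *m ratmx B.
Proof. exact: map_mxM. Qed.

Lemma det_ratmx (L : 'M[int]_d) : \det (ratmx L) = (\det L)%:~R.
Proof. exact: det_map_mx. Qed.

Lemma unit_int_abs (z : int) : z \is a GRing.unit -> `|z| = 1.
Proof.
by case/orP => /eqP ->.
Qed.

Lemma ratmx_unit (L : 'M[int]_d) : L \in unitmx ->
  [/\ ratmx L \in unitmx, invmx (ratmx L) = ratmx (invmx L)
    & `|\det (ratmx L)| = 1].
Proof.
move=> uL.
have h1 : ratmx L *m ratmx (invmx L) = 1%:M.
  by rewrite -ratmxM mulmxV // /ratmx map_mx1.
have hd : `|\det (ratmx L)| = 1.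
  rewrite det_ratmx; rewrite unitmxE in uL.
  by rewrite -intr_norm unit_int_abs.
have u : ratmx L \in unitmx.
  by rewrite unitmxE unitfE -normr_eq0 hd oner_neq0.
split=> //.
by rewrite -[invmx _]mulmx1 -h1 mulmxA mulVmx // mul1mx.
Qed.

End Basics.

Section Lattices.
Variable d : nat.
Implicit Types (M N W : 'M[rat]_d) (x y v w : 'cV[rat]_d).

Definition lat M : 'cV[rat]_d -> Prop := img M (@Zd d).

Lemma img_unit M (S : 'cV[rat]_d -> Prop) x : M \in unitmx ->
  img M S x <-> S (invmx M *m x).
Proof.
move=> uM; split; first by case=> v [Sv ->]; rewrite mulKmx.
by move=> Sx; exists (invmx M *m x); split=> //; rewrite mulKVmx.
Qed.

Lemma latP M x : M \in unitmx -> lat M x <-> Zd (invmx M *m x).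
Proof. exact: img_unit. Qed.

Lemma lat0 M : lat M 0.
Proof. by exists 0; split; [apply: intmx0 | rewrite mulmx0]. Qed.

Lemma latB M x y : lat M x -> lat M y -> lat M (x - y).
Proof.
case=> v [hv ->] [w [hw ->]]; exists (v - w); split; first exact: intmxB.
by rewrite mulmxBr.
Qed.

Lemma latD M x y : lat M x -> lat M y -> lat M (x + y).
Proof.
case=> v [hv ->] [w [hw ->]]; exists (v + w); split; first exact: intmxD.
by rewrite mulmxDr.
Qed.

Lemma latN M x : lat M x -> lat M (- x).
Proof. by move=> h; rewrite -sub0r; apply: latB => //; apply: lat0. Qed.

Lemma lat_Zd M x : intmx M -> lat M x -> Zd x.
Proof. by move=> hM [v [hv ->]]; apply: intmxM. Qed.

Lemma lat_col M v : Zd v -> lat M (M *m v).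
Proof. by move=> hv; exists v. Qed.

Lemma lat_Zd1 x : lat 1%:M x <-> Zd x.
Proof.
split; first by apply: lat_Zd; apply: intmx1.
by move=> hx; exists x; rewrite mul1mx.
Qed.

Lemma lat_incl_int M N : N \in unitmx ->
  (forall v, Zd v -> lat N (M *m v)) -> intmx (invmx N *m M).
Proof.
move=> uN h; apply: intmx_test => v hv; rewrite -mulmxA.
by apply/(latP _ uN); apply: h.
Qed.

End Lattices.

Section Smith.
Variable d : nat.
Implicit Types (M N U V W : 'M[rat]_d) (x y v w : 'cV[rat]_d).

Definition unimod U := [/\ intmx U, intmx (invmx U) & U \in unitmx].

Definition diagz (dd : 'I_d -> int) : 'M[rat]_d :=
  \matrix_(i, j) ((dd i)%:~R *+ (i == j)).

Lemma diagz_mul dd v i : (diagz dd *m v) i 0 = (dd i)%:~R * v i 0.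
Proof.
rewrite mxE (bigD1 i) //= big1 ?addr0; first by rewrite mxE eqxx mulr1n.
by move=> j /negbTE ji; rewrite mxE eq_sym ji mulr0n mul0r.
Qed.

Lemma det_diagz dd : \det (diagz dd) = \prod_i (dd i)%:~R.
Proof.
have -> : diagz dd = diag_mx (\row_i (dd i)%:~R).
  by apply/matrixP => i j; rewrite !mxE.
by rewrite det_diag; apply: eq_bigr => i _; rewrite mxE.
Qed.

Lemma intmx_diagz dd : intmx (diagz dd).
Proof. by move=> i j; rewrite mxE; case: (i == j); rewrite ?mulr1n ?intr_int. Qed.

Lemma unimod_int (L : 'M[int]_d) : L \in unitmx -> unimod (ratmx L).
Proof.
case/ratmx_unit => u e _; split=> //; rewrite ?e; exact: intmx_ratmx.
Qed.

Lemma unimod_det U : unimod U -> `|\det U| = 1.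
Proof.
case=> hU hV uU.
have [L eL] := intmx_ex hU; subst U; have [L' eL'] := intmx_ex hV.
have h : ratmx (L *m L') = 1%:M.
  by rewrite ratmxM -eL' mulmxV.
have : \det (L *m L') = 1.
  apply: (@intr_inj rat); rewrite -det_ratmx h det1 //.
rewrite det_mulmx mulrC => /intUnitRing.unitzPl uL.
by rewrite det_ratmx -intr_norm unit_int_abs.
Qed.

Lemma smith M : intmx M -> M \in unitmx ->
  exists U V dd, [/\ unimod U, unimod V, M = U *m diagz dd *m V
                 & forall i, dd i != 0].
Proof.
move=> hM uM; have [L eL] := intmx_ex hM.
have [U uU [V uV [s _ eLs]]] := int_Smith_normal_form L.
exists (ratmx U), (ratmx V), (fun i : 'I_d => s`_i).
have eD : ratmx (\matrix_(i, j) (s`_i *+ (i == j :> nat)) : 'M[int]_d)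
           = diagz (fun i : 'I_d => s`_i).
  apply/matrixP => i j; rewrite !mxE /=.
  have -> : (i == j :> nat) = (i == j) by [].
  by case: (i == j); rewrite ?mulr1n ?mulr0n.
have eM : M = ratmx U *m diagz (fun i : 'I_d => s`_i) *m ratmx V.
  by rewrite eL eLs !ratmxM eD.
split; [exact: unimod_int | exact: unimod_int | exact: eM |].
move=> i; apply/eqP => s0; move: uM; rewrite unitmxE eM !det_mulmx det_diagz.
rewrite (bigD1 i) //= s0 mul0r mulr0 mul0r.
by rewrite unitr0.
Qed.

End Smith.

Section Count.
Variable d : nat.
Implicit Types (M N U V W : 'M[rat]_d) (x y v w : 'cV[rat]_d).

Lemma unimod_inv U x : unimod U -> Zd x -> Zd (invmx U *m x).
Proof. by case=> _ hi _ hx; apply: intmxM. Qed.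

Lemma unimod_mul U x : unimod U -> Zd x -> Zd (U *m x).
Proof. by case=> hU _ _ hx; apply: intmxM. Qed.

Lemma int_small (a b : nat) (c z : int) :
  (a < `|c|)%N -> (b < `|c|)%N -> (a%:Z - b%:Z) = c * z -> z = 0.
Proof.
move=> ha hb e.
have : (absz (c * z)%R = absz (a%:Z - b%:Z)%R) by rewrite e.
rewrite abszM.
have [->|nz] := eqVneq z 0 => // h.
have : (0 < absz z)%N by rewrite absz_gt0.
nia.
Qed.

Lemma count_lat M : intmx M -> M \in unitmx ->
  exists n : nat, coset_count (lat M) n /\ (n%:R : rat) = `|\det M|.
Proof.
move=> hM uM; have [U [V [dd [uU uV eM nz]]]] := smith hM uM.
have uUu : U \in unitmx by case: uU.
have uVu : V \in unitmx by case: uV.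
pose T := {dffun forall i : 'I_d, 'I_(`|dd i|%N)}.
pose tv (t : T) : 'cV[rat]_d := \col_i ((t i : nat)%:R).
have htv t : Zd (tv t) by move=> i j; rewrite mxE rpred_nat.
exists #|T|; split; last first.
  rewrite card_dep_ffun foldrE big_map big_enum /=.
  rewrite eM !det_mulmx !normrM (unimod_det uU) (unimod_det uV) mul1r mulr1.
  rewrite det_diagz normr_prod natr_prod; apply: eq_bigr => i _.
  by rewrite card_ord natr_absz intr_norm.
exists (fun k => U *m tv (enum_val k)); split.
- by move=> k; apply: unimod_mul.
- move=> k k' [w [hw e]]; apply: enum_val_inj.
  move: e; rewrite -mulmxBr eM -!mulmxA => /(congr1 (mulmx (invmx U))).
  rewrite !mulKmx // => e.
  apply/ffunP => i; apply: val_inj => /=.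
  have /intrP [z ez] : (V *m w) i 0 \is a Num.int by apply: intmxM; case: uV.
  have := congr1 (fun X : 'cV[rat]_d => X i 0) e; rewrite diagz_mul ez -intrM !mxE.
  rewrite -[((enum_val k i : nat)%:R)]/(((enum_val k i : nat)%:Z)%:~R).
  rewrite -[((enum_val k' i : nat)%:R)]/(((enum_val k' i : nat)%:Z)%:~R).
  rewrite -intrB => /intr_inj e2.
  have z0 := int_small (ltn_ord _) (ltn_ord _) e2.
  by move: e2; rewrite z0 mulr0 => /eqP; rewrite subr_eq0 => /eqP [].
- move=> x hx.
  pose y := invmx U *m x.
  have hy : Zd y by apply: unimod_inv.
  have ex : x = U *m y by rewrite /y mulKVmx.
  clearbody y.
  pose z i := numq (y i 0).
  have ez i : y i 0 = (z i)%:~R by rewrite /z numqK //; apply: hy.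
  have hlt i : (`|(z i %% dd i)%Z|%N < `|dd i|%N)%N.
    have := ltz_mod (z i) (nz i); have := modz_ge0 (z i) (nz i); lia.
  pose t : T := finfun (fun i => Ordinal (hlt i)).
  pose wv : 'cV[rat]_d := \col_i ((z i %/ dd i)%Z)%:~R.
  exists (enum_rank t); exists (invmx V *m wv); split.
    by apply: unimod_inv => // i j; rewrite mxE intr_int.
  rewrite enum_rankK eM -!mulmxA mulKVmx //.
  rewrite {1}ex -mulmxBr; congr (U *m _).
  apply/matrixP => i j; rewrite (ord1 j) diagz_mul.
  rewrite !mxE ez /t ffunE /=.
  rewrite natr_absz ger0_norm; last exact: modz_ge0.
  rewrite {1}(divz_eq (z i) (dd i)) intrD addrK intrM mulrC.
  by [].
Qed.

End Count.

Section Pigeon.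
Variable d : nat.
Implicit Types (S : 'cV[rat]_d -> Prop) (x y : 'cV[rat]_d).

Definition subgrp S := S 0 /\ forall x y, S x -> S y -> S (x - y).

Lemma subgrpN S x : subgrp S -> S x -> S (- x).
Proof. by case=> S0 SB Sx; rewrite -sub0r; apply: SB. Qed.

Lemma subgrpD S x y : subgrp S -> S x -> S y -> S (x + y).
Proof.
move=> hS Sx Sy; rewrite -[y]opprK; case: (hS) => _ SB; apply: SB => //.
exact: subgrpN.
Qed.

Lemma subgrp_tr S x y z : subgrp S -> S (x - z) -> S (y - z) -> S (x - y).
Proof.
move=> [_ SB] h1 h2; have := SB _ _ h1 h2.
by rewrite opprB addrA subrK.
Qed.

Lemma subgrp_lat M : subgrp (lat M).
Proof. by split; [apply: lat0 | move=> x y; apply: latB]. Qed.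

Lemma pigeon S n k (r : 'I_n -> 'cV[rat]_d) (r' : 'I_k -> 'cV[rat]_d) :
  subgrp S -> (forall x, Zd x -> exists i, S (x - r i)) ->
  (forall j, Zd (r' j)) -> (forall j j', S (r' j - r' j') -> j = j') ->
  (k <= n)%N.
Proof.
move=> hS cov hr' dis.
have [f hf] : exists f : 'I_k -> 'I_n, forall j, S (r' j - r (f j)).
  exact: (@fin_all_exists _ (fun _ => 'I_n) (fun j i => S (r' j - r i)) (fun j => cov _ (hr' j))).
have injf : injective f.
  by move=> j j' e; apply: dis; apply: (subgrp_tr hS (hf j)); rewrite e.
by have := leq_card f injf; rewrite !card_ord.
Qed.

Lemma cover S n (r r' : 'I_n -> 'cV[rat]_d) :
  subgrp S -> (forall x, Zd x -> exists i, S (x - r i)) ->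
  (forall j, Zd (r' j)) -> (forall j j', S (r' j - r' j') -> j = j') ->
  forall y, Zd y -> exists j, S (y - r' j).
Proof.
move=> hS cov hr' dis.
have [f hf] : exists f : 'I_n -> 'I_n, forall j, S (r' j - r (f j)).
  exact: (@fin_all_exists _ (fun _ => 'I_n) (fun j i => S (r' j - r i)) (fun j => cov _ (hr' j))).
have injf : injective f.
  by move=> j j' e; apply: dis; apply: (subgrp_tr hS (hf j)); rewrite e.
have [g fg gf] := injF_bij injf.
move=> y hy; have [i hi] := cov y hy.
exists (g i); apply: (subgrp_tr (z := r i) hS hi); by have := hf (g i); rewrite gf.
Qed.

Lemma count_unique S n n' : subgrp S -> coset_count S n -> coset_count S n' -> n = n'.
Proof.
move=> hS [r [hr dr cr]] [r' [hr' dr' cr']]; apply/eqP; rewrite eqn_leq.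
by rewrite (pigeon hS cr' hr dr) (pigeon hS cr hr' dr').
Qed.

End Pigeon.

Section Basis.
Variable d : nat.
Implicit Types (S : 'cV[rat]_d -> Prop) (x y : 'cV[rat]_d).

Lemma subgrp_intZ S x (z : int) : subgrp S -> S x -> S (z%:~R *: x).
Proof.
move=> hS Sx; case: z => n.
  elim: n => [|n IH]; first by rewrite scale0r; case: hS.
  rewrite (_ : Posz n.+1 = Posz n + 1); last by rewrite -addn1 PoszD.
  by rewrite intrD scalerDl scale1r; apply: subgrpD.
rewrite NegzE intrN scaleNr; apply: subgrpN => //.
elim: n => [|n IH]; first by rewrite scale1r.
rewrite (_ : Posz n.+2 = Posz n.+1 + 1); last by rewrite -addn1 PoszD.
by rewrite intrD scalerDl scale1r; apply: subgrpD.
Qed.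

Lemma subgrp_sum S I (r : seq I) (P : pred I) (F : I -> 'cV[rat]_d) :
  subgrp S -> (forall i, P i -> S (F i)) -> S (\sum_(i <- r | P i) F i).
Proof.
move=> hS h; apply: (big_ind S) => //; first by case: hS.
by move=> a b Sa Sb; apply: subgrpD.
Qed.

Lemma basis_ex S (m : nat) : (0 < m)%N -> subgrp S -> (forall x, S x -> Zd x) ->
  (forall v, Zd v -> S (m%:R *: v)) ->
  exists M, [/\ intmx M, M \in unitmx & forall x, S x <-> lat M x].
Proof.
move=> m0 hS SZ Sm.
pose B := {ffun 'I_d -> 'I_m}.
pose bx (f : B) : 'cV[rat]_d := \col_i ((f i : nat)%:R).
pose gens := [seq bx f | f <- enum B & `[< S (bx f) >]] ++
             [seq m%:R *: (delta_mx i 0 : 'cV[rat]_d) | i <- enum 'I_d].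
pose k := size gens.
pose G : 'M[rat]_(d, k) := \matrix_(i, j) (nth 0 gens j) i 0.
have genS g : g \in gens -> S g.
  rewrite mem_cat => /orP [/mapP [f] | /mapP [i _ ->]].
  - by rewrite mem_filter => /andP [/asboolP h _] ->.
  - by apply: (Sm); apply: intmx_delta.
have Gcol (j : 'I_k) : G *m delta_mx j 0 = nth 0 gens j.
  apply/matrixP => i l; rewrite (ord1 l) mxE (bigD1 j) //= big1 ?addr0.
    by rewrite !mxE !eqxx mulr1.
  by move=> j' /negbTE; rewrite !mxE => ->; rewrite mulr0.
have ngen (j : 'I_k) : nth 0 gens j \in gens by apply: mem_nth.
have intG : intmx G by move=> i j; rewrite mxE; apply: (SZ); apply: (genS).
pose Sp x := exists u : 'cV[rat]_k, Zd u /\ x = G *m u.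
have SpS x : Sp x -> S x.
  case=> u [hu ->].
  have -> : G *m u = \sum_(j < k) u j 0 *: nth 0 gens j.
    rewrite {1}[u]matrix_sum_delta mulmx_sumr; apply: eq_bigr => j _.
    by rewrite big_ord1 -scalemxAr Gcol.
  apply: subgrp_sum => // j _; have /intrP [z ->] := hu j 0.
  by apply: subgrp_intZ => //; apply: (genS).
have Sp0 : Sp 0 by exists 0; split; [apply: intmx0 | rewrite mulmx0].
have SpD x y : Sp x -> Sp y -> Sp (x + y).
  case=> u [hu ->] [v [hv ->]]; exists (u + v); split; first exact: intmxD.
  by rewrite mulmxDr.
have SpZ x (z : int) : Sp x -> Sp (z%:~R *: x).
  case=> u [hu ->]; exists (z%:~R *: u); split; first by apply: intmxZ; rewrite ?intr_int.
  by rewrite scalemxAr.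
have Spgen g : g \in gens -> Sp g.
  move=> hg; have hj : (index g gens < k)%N by rewrite index_mem.
  exists (delta_mx (Ordinal hj) 0); split; first exact: intmx_delta.
  by rewrite Gcol /= nth_index.
have SSp x : S x -> Sp x.
  move=> Sx; have hx := SZ _ Sx.
  pose z i := numq (x i 0).
  have ez i : x i 0 = (z i)%:~R by rewrite /z numqK //; apply: hx.
  have mz : (m%:Z != 0) by rewrite eqz_nat -lt0n.
  have hlt i : (`|(z i %% m%:Z)%Z|%N < m)%N.
    have := ltz_mod (z i) mz; have := modz_ge0 (z i) mz; lia.
  pose f : B := [ffun i => Ordinal (hlt i)].
  pose q : 'cV[rat]_d := \col_i ((z i %/ m%:Z)%Z)%:~R.
  have hq : Zd q by move=> i j; rewrite mxE intr_int.
  have exq : x = bx f + m%:R *: q.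
    apply/matrixP => i j; rewrite (ord1 j) !mxE ez ffunE /=.
    rewrite natr_absz ger0_norm; last exact: modz_ge0.
    rewrite {1}(divz_eq (z i) m%:Z) intrD intrM addrC; congr (_ + _).
    by rewrite mulrC.
  have Sbx : S (bx f).
    have -> : bx f = x - m%:R *: q by rewrite exq addrK.
    by case: hS => _ SB; apply: SB => //; apply: (Sm).
  have gbx : bx f \in gens.
    rewrite mem_cat; apply/orP; left; apply/mapP; exists f => //.
    by rewrite mem_filter mem_enum andbT; apply/asboolP.
  rewrite exq; apply: (SpD); first exact: Spgen.
  rewrite {1}[q]matrix_sum_delta scaler_sumr.
  apply: (big_ind Sp); [exact: Sp0 | by move=> a b; exact: SpD | ].
  move=> i _; rewrite big_ord1 scalerA mulrC -scalerA.
  have /intrP [w ->] := hq i 0; apply: (SpZ); apply: (Spgen).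
  rewrite mem_cat; apply/orP; right; apply/mapP; exists i => //.
  by rewrite mem_enum.
have [Gz eG] := intmx_ex intG.
have [L uL [R uR [s _ eGz]]] := int_Smith_normal_form Gz.
pose Dp : 'M[rat]_d := diagz (fun i : 'I_d => s`_i).
pose P : 'M[rat]_(d, k) := \matrix_(i, j) (i == j :> nat)%:R.
have dk : (d <= k)%N.
  by rewrite /k size_cat !size_map -enumT size_enum_ord leq_addl.
have eD : ratmx (\matrix_(i, j) (s`_i *+ (i == j :> nat)) : 'M[int]_(d, k))
            = Dp *m P.
  apply/matrixP => i j; rewrite !mxE (bigD1 i) //= big1 ?addr0.
    rewrite !mxE eqxx mulr1n.
    by case: (_ == _) => /=; rewrite ?mulr1n ?mulr0n ?mulr1n ?mulr0n ?mulr1 ?mulr0.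
  by move=> l /negbTE li; rewrite !mxE eq_sym li mulr0n mul0r.
have PPt : P *m P^T = 1%:M.
  apply/matrixP => i i'; rewrite !mxE (bigD1 (widen_ord dk i)) //= big1 ?addr0.
    rewrite !mxE /= eqxx mul1r.
    by rewrite eq_sym.
  move=> j /negbTE hj; rewrite !mxE.
  have -> : (i == j :> nat) = false by rewrite eq_sym; apply: hj.
  by rewrite mul0r.
have [uLr iL _] := ratmx_unit uL.
have [uRr iR _] := ratmx_unit uR.
pose M := ratmx L *m Dp.
have eGM : G = M *m (P *m ratmx R).
  by rewrite eG eGz !ratmxM eD !mulmxA.
have intM : intmx M by apply: intmxM; [apply: intmx_ratmx | apply: intmx_diagz].
have intP : intmx P by move=> i j; rewrite mxE rpred_nat.
have SpM x : Sp x <-> lat M x.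
  split.
    case=> u [hu ->]; exists (P *m ratmx R *m u); split.
      by apply: intmxM => //; apply: intmxM => //; apply: intmx_ratmx.
    by rewrite eGM !mulmxA.
  case=> v [hv ->]; exists (invmx (ratmx R) *m (P^T *m v)); split.
    rewrite iR; apply: intmxM; first exact: intmx_ratmx.
    by apply: intmxM => // i j; rewrite mxE; apply: intP.
  by rewrite eGM -!mulmxA mulKVmx // (mulmxA P) PPt mul1mx.
have eS x : S x <-> lat M x.
  by split => [/SSp/SpM | /SpM/SpS].
exists M; split => //.
have [wf hwf] : exists wf : 'I_d -> 'cV[rat]_d,
    forall i, Zd (wf i) /\ m%:R *: delta_mx i 0 = M *m wf i.
  apply: (@fin_all_exists _ (fun _ => 'cV[rat]_d)
            (fun i w => Zd w /\ m%:R *: delta_mx i 0 = M *m w)) => i.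
  by have [w [hw ew]] := (eS _).1 (Sm _ (intmx_delta i 0)); exists w.
pose W : 'M[rat]_d := \matrix_(a, b) wf b a 0.
have eMW : M *m W = (m%:R : rat)%:M.
  apply/matrixP => a b.
  have := congr1 (fun X : 'cV[rat]_d => X a 0) (hwf b).2.
  rewrite !mxE => e.
  rewrite (_ : \sum_j M a j * W j b = \sum_j M a j * wf b j 0); last first.
    by apply: eq_bigr => c _; rewrite [W c b]mxE.
  by rewrite -e andbT; case: (a == b); rewrite ?mulr1 ?mulr0 ?mulr1n ?mulr0n.
rewrite unitmxE unitfE; apply/eqP => det0.
have := congr1 determinant eMW; rewrite det_mulmx det0 mul0r det_scalar.
move/eqP; rewrite eq_sym expf_eq0 pnatr_eq0 => /andP [_ /eqP m00].
by rewrite m00 in m0.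
Qed.

End Basis.

Lemma inv_uniq d (M X : 'M[rat]_d) : M \in unitmx -> M *m X = 1%:M -> invmx M = X.
Proof. by move=> uM e; rewrite -[X](mulKmx uM) e mulmx1. Qed.

Lemma invmxM2 d (M N : 'M[rat]_d) : M \in unitmx -> N \in unitmx ->
  invmx (M *m N) = invmx N *m invmx M.
Proof.
move=> uM uN; apply: inv_uniq; first by rewrite unitmx_mul uM uN.
by rewrite -mulmxA (mulmxA N) mulmxV // mul1mx mulmxV.
Qed.

Lemma intmx_scale_inv d (N : 'M[rat]_d) : intmx N -> N \in unitmx ->
  intmx (`|\det N| *: invmx N).
Proof.
move=> hN uN; have [Nz eN] := intmx_ex hN.
rewrite /invmx uN scalerA normrEsign -mulrA mulfV; last first.
  by rewrite -unitfE -unitmxE.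
rewrite mulr1 eN -map_mx_adj; apply: intmxZ; last exact: intmx_ratmx.
by rewrite rpredX // rpredN rpred1.
Qed.

Section Main.
Variables (d p q : nat) (L1 L2 : 'M[int]_d).
Hypotheses (n1 : \det L1 != 0) (n2 : \det L2 != 0) (cop : coprime_pair L1 L2)
  (hp : `|\det L1| = p%:Z) (hq : `|\det L2| = q%:Z).

Let R1 := ratmx L1.
Let R2 := ratmx L2.
Let A := invmx R1 *m R2.
Let Bm := invmx R2 *m R1.

Lemma u1 : R1 \in unitmx.
Proof. by rewrite unitmxE /R1 det_ratmx unitfE intr_eq0. Qed.
Lemma u2 : R2 \in unitmx.
Proof. by rewrite unitmxE /R2 det_ratmx unitfE intr_eq0. Qed.
Lemma dR1 : `|\det R1| = p%:R.
Proof. by rewrite /R1 det_ratmx -intr_norm hp. Qed.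
Lemma dR2 : `|\det R2| = q%:R.
Proof. by rewrite /R2 det_ratmx -intr_norm hq. Qed.
Lemma p0 : (0 < p)%N.
Proof. by rewrite lt0n -(eqr_nat rat) -dR1 normr_eq0 det_ratmx intr_eq0. Qed.
Lemma q0 : (0 < q)%N.
Proof. by rewrite lt0n -(eqr_nat rat) -dR2 normr_eq0 det_ratmx intr_eq0. Qed.
Lemma uA : A \in unitmx.
Proof. by rewrite unitmx_mul unitmx_inv u1 u2. Qed.
Lemma uB : Bm \in unitmx.
Proof. by rewrite unitmx_mul unitmx_inv u1 u2. Qed.
Lemma BA : Bm *m A = 1%:M.
Proof. by rewrite /Bm /A -mulmxA (mulmxA R1) mulmxV ?u1 // mul1mx mulVmx ?u2. Qed.
Lemma AB : A *m Bm = 1%:M.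
Proof. by rewrite /Bm /A -mulmxA (mulmxA R2) mulmxV ?u2 // mul1mx mulVmx ?u1. Qed.
Lemma invA : invmx A = Bm.
Proof. by apply: inv_uniq; [apply: uA | apply: AB]. Qed.
Lemma invB : invmx Bm = A.
Proof. by apply: inv_uniq; [apply: uB | apply: BA]. Qed.

Lemma lamP (x : 'cV[rat]_d) : Lambda L1 L2 x <-> [/\ Zd x, Zd (Bm *m x) & Zd (A *m x)].
Proof.
rewrite /Lambda -/R1 -/R2 -/A -/Bm.
split; case=> h1 h2 h3; split => //.
- by move/(img_unit _ _ uA): h2; rewrite invA.
- by move/(img_unit _ _ uB): h3; rewrite invB.
- by apply/(img_unit _ _ uA); rewrite invA.
- by apply/(img_unit _ _ uB); rewrite invB.
Qed.

Lemma g1P (x : 'cV[rat]_d) : Gamma1 L1 L2 x <-> Lambda L1 L2 x /\ Lambda L1 L2 (A *m x).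
Proof.
rewrite /Gamma1 -/R1 -/R2 -/Bm; split; case=> h1 h2; split => //.
- by move/(img_unit _ _ uB): h2; rewrite invB.
- by apply/(img_unit _ _ uB); rewrite invB.
Qed.

Lemma l1lP (y : 'cV[rat]_d) : img R1 (Lambda L1 L2) y <-> Lambda L1 L2 (invmx R1 *m y).
Proof. exact: img_unit u1. Qed.

Lemma intq : intmx (q%:R *: invmx R2).
Proof. by rewrite -dR2; apply: intmx_scale_inv; [apply: intmx_ratmx | apply: u2]. Qed.
Lemma intp : intmx (p%:R *: invmx R1).
Proof. by rewrite -dR1; apply: intmx_scale_inv; [apply: intmx_ratmx | apply: u1]. Qed.


Lemma intqB : intmx (q%:R *: Bm).
Proof. by rewrite /Bm scalemxAl; apply: intmxM; [apply: intq | apply: intmx_ratmx]. Qed.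
Lemma intpA : intmx (p%:R *: A).
Proof. by rewrite /A scalemxAl; apply: intmxM; [apply: intp | apply: intmx_ratmx]. Qed.

Lemma ZdZn (n : nat) (v : 'cV[rat]_d) : Zd v -> Zd (n%:R *: v).
Proof. by move=> hv; apply: intmxZ => //; apply: rpred_nat. Qed.

Lemma lam_mul (v : 'cV[rat]_d) : Zd v -> Lambda L1 L2 ((p * q)%:R *: v).
Proof.
move=> hv; apply/lamP; split; first exact: ZdZn.
- rewrite natrM -scalerA -!scalemxAr scalemxAl.
  by apply: ZdZn; apply: intmxM => //; apply: intqB.
- rewrite natrM mulrC -scalerA -!scalemxAr scalemxAl.
  by apply: ZdZn; apply: intmxM => //; apply: intpA.
Qed.

Lemma lam_sub : subgrp (Lambda L1 L2).
Proof.
split; first by apply/lamP; split; rewrite ?mulmx0; apply: intmx0.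
move=> x y /lamP [h1 h2 h3] /lamP [k1 k2 k3]; apply/lamP.
by split; rewrite ?mulmxBr; apply: intmxB.
Qed.

Lemma lam_Zd (x : 'cV[rat]_d) : Lambda L1 L2 x -> Zd x.
Proof. by case/lamP. Qed.

Lemma lamA (x : 'cV[rat]_d) : Lambda L1 L2 x -> Zd (A *m x).
Proof. by case/lamP. Qed.

Definition Ys (x : 'cV[rat]_d) := Zd x /\ Zd (Bm *m x).

Lemma ys_sub : subgrp Ys.
Proof.
split; first by split; rewrite ?mulmx0; apply: intmx0.
move=> x y [h1 h2] [k1 k2]; split; rewrite ?mulmxBr; exact: intmxB.
Qed.

Lemma ys_mul (v : 'cV[rat]_d) : Zd v -> Ys (q%:R *: v).
Proof.
move=> hv; split; first exact: ZdZn.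
by rewrite -scalemxAr scalemxAl; apply: intmxM => //; apply: intqB.
Qed.

Lemma g1_sub : subgrp (Gamma1 L1 L2).
Proof.
case: lam_sub => l0 lB.
split; first by apply/g1P; rewrite mulmx0.
move=> x y /g1P [h1 h2] /g1P [k1 k2]; apply/g1P; split; first exact: lB.
by rewrite mulmxBr; apply: lB.
Qed.

Lemma g1_mul (v : 'cV[rat]_d) : Zd v -> Gamma1 L1 L2 ((p * p * q)%:R *: v).
Proof.
move=> hv; apply/g1P; split.
  by rewrite -mulnA mulnC natrM -scalerA; apply: lam_mul; apply: ZdZn.
rewrite -mulnA mulnC natrM -scalerA -scalemxAr -scalemxAr scalemxAl.
by apply: lam_mul; apply: intmxM => //; apply: intpA.
Qed.

Lemma phi_inj (x : 'cV[rat]_d) : Zd x -> img R1 (Lambda L1 L2) ((R1 + R2) *m x) -> Gamma1 L1 L2 x.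
Proof.
move=> hx /l1lP; rewrite mulmxDl mulmxDr mulmxA mulVmx ?u1 // mul1mx mulmxA -/A.
case/lamP => h1 h2 h3.
have eAx : A *m x = (x + A *m x) - x by rewrite addrAC subrr add0r.
have hAx : Zd (A *m x) by rewrite eAx; apply: intmxB.
have hBx : Zd (Bm *m x).
  have -> : Bm *m x = Bm *m (x + A *m x) - x by rewrite mulmxDr mulmxA BA mul1mx addrK.
  exact: intmxB.
have hAAx : Zd (A *m (A *m x)).
  have -> : A *m (A *m x) = A *m (x + A *m x) - A *m x by rewrite mulmxDr addrAC subrr add0r.
  exact: intmxB.
apply/g1P; split; apply/lamP; split => //.
by rewrite mulmxA BA mul1mx.
Qed.

Lemma phi_wd (x : 'cV[rat]_d) : Gamma1 L1 L2 x ->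
  img R1 (Lambda L1 L2) (R1 *m x) /\ img R1 (Lambda L1 L2) (R2 *m x).
Proof.
case/g1P => h1 h2; split; apply/l1lP; first by rewrite mulmxA mulVmx ?u1 // mul1mx.
by rewrite mulmxA -/A.
Qed.

Lemma l1l_Zd (y : 'cV[rat]_d) : img R1 (Lambda L1 L2) y -> Zd y.
Proof. by case=> v [/lam_Zd hv ->]; apply: intmxM => //; apply: intmx_ratmx. Qed.

Lemma cop_bound (Q N : 'M[rat]_d) : Q \in unitmx -> N \in unitmx ->
  intmx (invmx N *m R1 *m Q) -> intmx (invmx N *m R2 *m Q) ->
  `|\det N| <= `|\det Q|.
Proof.
move=> uQ uN h1 h2; rewrite leNgt; apply/negP => lt; apply: cop.
exists (invmx N), Q; split => //; first by rewrite unitmx_inv.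
have dN : `|\det N| != 0 by rewrite normr_eq0 -unitfE -unitmxE.
have dQ : `|\det Q| != 0 by rewrite normr_eq0 -unitfE -unitmxE.
rewrite det_inv normrM normfV mulrC; apply/andP; split.
  by rewrite divr_gt0 // lt_def ?dQ ?dN normr_ge0.
by rewrite ltr_pdivrMr ?mul1r // lt_def dN normr_ge0.
Qed.


Lemma lamY (x : 'cV[rat]_d) : Lambda L1 L2 x -> Ys x.
Proof. by case/lamP. Qed.
Lemma lamAY (x : 'cV[rat]_d) : Lambda L1 L2 x -> Ys (A *m x).
Proof. by case/lamP => h1 h2 h3; split => //; rewrite mulmxA BA mul1mx. Qed.

Lemma key :
  coset_count (Gamma1 L1 L2) (p ^ 2 * q) /\
  (forall y, Zd y -> exists x, Zd x /\
      img R1 (Lambda L1 L2) ((R1 + R2) *m x - y)) /\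
  (exists n, coset_count (img R1 (Lambda L1 L2)) n).
Proof.
have [CY [iCY uCY eY]] := basis_ex q0 ys_sub (fun x h => h.1) ys_mul.
have bY : q%:R <= `|\det CY|.
  rewrite -dR2; apply: cop_bound => //; first exact: u2.
  - rewrite -/Bm; apply: intmx_test => v hv; rewrite -mulmxA.
    by have [] : Ys (CY *m v) by apply/eY; exists v.
  - by rewrite mulVmx ?u2 // mul1mx.
have pq0 : (0 < p * q)%N by rewrite muln_gt0 p0 q0.
have [CL [iCL uCL eL]] := basis_ex pq0 lam_sub lam_Zd lam_mul.
have bL1 : (p * q)%:R <= `|\det CL|.
  apply: (@le_trans _ _ `|\det (R1 *m CY)|).
    by rewrite det_mulmx normrM dR1 natrM ler_pM2l // ltr0n p0.
  apply: cop_bound => //; first by rewrite unitmx_mul u1.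
  - rewrite invmxM2 ?u1 // -!mulmxA (mulmxA (invmx R1)) mulVmx ?u1 // mul1mx.
    apply: (lat_incl_int uCY) => v hv; apply/eY; apply: lamY; apply/eL.
    exact: lat_col.
  - rewrite invmxM2 ?u1 // -!mulmxA (mulmxA (invmx R1)) -/A.
    apply: (lat_incl_int uCY) => v hv; apply/eY; rewrite -mulmxA; apply: lamAY.
    by apply/eL; apply: lat_col.
have [nL [[rL [hrL drL crL]] enL]] := count_lat iCL uCL.
have [m1 [[r1 [hr1 dr1 cr1]] em1]] := count_lat (intmx_ratmx L1) u1.
have [m2 [[r2 [hr2 dr2 cr2]] em2]] := count_lat (intmx_ratmx L2) u2.
have m1p : m1 = p by apply/eqP; rewrite -(eqr_nat rat) em1 dR1.
have m2q : m2 = q by apply/eqP; rewrite -(eqr_nat rat) em2 dR2.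
have [f1 hf1] : exists f : 'I_nL -> 'I_m1, forall i, lat R1 (R2 *m rL i - r1 (f i)).
  exact: (@fin_all_exists _ (fun _ => 'I_m1) (fun i j => lat R1 (R2 *m rL i - r1 j))
     (fun i => cr1 _ (intmxM (intmx_ratmx L2) (hrL i)))).
have [f2 hf2] : exists f : 'I_nL -> 'I_m2, forall i, lat R2 (R1 *m rL i - r2 (f i)).
  exact: (@fin_all_exists _ (fun _ => 'I_m2) (fun i j => lat R2 (R1 *m rL i - r2 j))
     (fun i => cr2 _ (intmxM (intmx_ratmx L1) (hrL i)))).
have injf : injective (fun i => (f1 i, f2 i)).
  move=> i i' [e1 e2]; apply: drL; apply/eL.
  have h1 : lat R1 (R2 *m (rL i - rL i')).
    rewrite mulmxBr; apply: (subgrp_tr (subgrp_lat _) (hf1 i)); rewrite e1; exact: hf1.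
  have h2 : lat R2 (R1 *m (rL i - rL i')).
    rewrite mulmxBr; apply: (subgrp_tr (subgrp_lat _) (hf2 i)); rewrite e2; exact: hf2.
  apply/lamP; split; first exact: (intmxB (hrL i) (hrL i')).
  - by move/(latP _ u2): h2; rewrite mulmxA.
  - by move/(latP _ u1): h1; rewrite mulmxA.
have := leq_card _ injf; rewrite card_prod !card_ord m1p m2q => nLle.
have eCL : `|\det CL| = (p * q)%:R.
  by apply/eqP; rewrite eq_le bL1 -enL ler_nat nLle.
have ppq0 : (0 < p * p * q)%N by rewrite !muln_gt0 p0 q0.
have [CG [iCG uCG eG]] := basis_ex ppq0 g1_sub
   (fun x h => lam_Zd ((g1P x).1 h).1) g1_mul.
have bG : (p * p * q)%:R <= `|\det CG|.
  have : `|\det (R1 *m CL)| <= `|\det CG|.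
    apply: cop_bound => //; first by rewrite unitmx_mul u1.
    - rewrite invmxM2 ?u1 // -!mulmxA (mulmxA (invmx R1)) mulVmx ?u1 // mul1mx.
      apply: (lat_incl_int uCL) => v hv; apply/eL.
      by have /eG/g1P [] : lat CG (CG *m v) by apply: lat_col.
    - rewrite invmxM2 ?u1 // -!mulmxA (mulmxA (invmx R1)) -/A.
      apply: (lat_incl_int uCL) => v hv; apply/eL; rewrite -mulmxA.
      by have /eG/g1P [] : lat CG (CG *m v) by apply: lat_col.
  by rewrite det_mulmx normrM dR1 eCL -natrM mulnA.
have uRL : R1 *m CL \in unitmx by rewrite unitmx_mul u1.
have eLL y : img R1 (Lambda L1 L2) y <-> lat (R1 *m CL) y.
  rewrite l1lP eL (latP _ uCL) (latP _ uRL) invmxM2 ?u1 //.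
  by rewrite mulmxA.
have [nLL [[rLL [hrLL drLL crLL]] enLL]] :=
  count_lat (intmxM (intmx_ratmx L1) iCL) uRL.
have nLLv : nLL = (p * p * q)%N.
  by apply/eqP; rewrite -(eqr_nat rat) enLL det_mulmx normrM dR1 eCL -natrM mulnA.
have [nG [[rG [hrG drG crG]] enG]] := count_lat iCG uCG.
pose phi (x : 'cV[rat]_d) := (R1 + R2) *m x.
have hphi j : Zd (phi (rG j)).
  by rewrite /phi; apply: intmxM; [apply: intmxD; apply: intmx_ratmx | apply: hrG].
have dphi j j' : lat (R1 *m CL) (phi (rG j) - phi (rG j')) -> j = j'.
  move=> h; apply: drG; apply/eG; apply: phi_inj; first exact: (intmxB (hrG j) (hrG j')).
  by apply/eLL; rewrite mulmxBr.
have nGle : (nG <= nLL)%N := pigeon (subgrp_lat _) crLL hphi dphi.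
have nGge : (p * p * q <= nG)%N by rewrite -(ler_nat rat) enG.
have eGn : nG = (p ^ 2 * q)%N.
  by apply/eqP; rewrite -mulnn eqn_leq nGge -nLLv nGle.
have eGL : nLL = nG by rewrite eGn nLLv mulnn.
split; last split.
- rewrite -eGn; exists rG; split => //.
    by move=> i j /g1P h; apply: drG; apply/eG; apply/g1P.
  by move=> x hx; have [i hi] := crG x hx; exists i; apply/eG.
- pose r' (j : 'I_nLL) := phi (rG (cast_ord eGL j)).
  have hr' j : Zd (r' j) by apply: hphi.
  have dr' j j' : lat (R1 *m CL) (r' j - r' j') -> j = j'.
    by move/dphi => /(congr1 (cast_ord (esym eGL))); rewrite !cast_ordK.
  move=> y hy; have [j hj] := cover (subgrp_lat _) crLL hr' dr' hy.
  exists (rG (cast_ord eGL j)); split => //.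
  by apply/eLL; rewrite -opprB; apply: latN.
- exists nLL, rLL; split => //; first by move=> i j /eLL; apply: drLL.
  by move=> x hx; have [i hi] := crLL x hx; exists i; apply/eLL.
Qed.

End Main.

Theorem lemma4p3 (d p q : nat) (L1 L2 : 'M[int]_d) :
  \det L1 != 0 -> \det L2 != 0 ->
  irreducible L1 L2 -> coprime_pair L1 L2 ->
  `|\det L1| = p%:Z -> `|\det L2| = q%:Z ->
  let L1Lam := img (ratmx L1) (Lambda L1 L2) in
  let G1 := Gamma1 L1 L2 in
  (* L1 Lambda is a subgroup of Z^d; Gamma_1 ⊆ Z^d by definition *)
      subsetQ L1Lam (@Zd d) /\
      (* phi_1, phi_2 are well defined on Z^d / Gamma_1 *)
      (forall x, G1 x -> L1Lam (ratmx L1 *m x) /\ L1Lam (ratmx L2 *m x)) /\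
      (* both quotient groups are finite *)
      ((exists n, coset_count G1 n) /\ (exists n, coset_count L1Lam n)) /\
      (* phi_1 + phi_2 is injective ... *)
      (forall x, Zd x -> L1Lam ((ratmx L1 + ratmx L2) *m x) -> G1 x) /\
      (* ... and surjective *)
      (forall y, Zd y -> exists x, Zd x /\
                   L1Lam ((ratmx L1 + ratmx L2) *m x - y)) /\
      (* Gamma_1 has index p^2 q in Z^d *)
      coset_count G1 (p ^ 2 * q)%N.
Proof.
move=> n1 n2 _ cop hp hq L1Lam G1.
have [hc [hs he]] := key n1 n2 cop hp hq.
split; first by move=> y; apply: (l1l_Zd n1 n2).
split; first by move=> x; apply: (phi_wd n1 n2).
split; first by split; [exists (p ^ 2 * q)%N | ].
split; first by move=> x; apply: (phi_inj n1 n2).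
by split.
Qed.
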